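(* For every NFA $\mathcal A$, the relation $P(\subseteq^{\mathrm{bw}},\sqsubset^{\mathrm{di}})$ is good for pruning on NFA: $\mathcal L(\mathrm{Prune}(\mathcal A,P(\subseteq^{\mathrm{bw}},\sqsubset^{\mathrm{di}})))=\mathcal L(\mathcal A)$.
   Context: An NFA is $\mathcal A=(\Sigma,Q,I,F,\delta)$, $\delta\subseteq Q\times\Sigma\times Q$, assumed forward and backward complete; its language is the set of finite words having a finite trace starting in $I$ and ending in $F$. Direct simulation $\sqsubseteq^{\mathrm{di}}$: in the game from $(p_0,q_0)$, at round $i$ from $(p_i,q_i)$ Spoiler picks $p_i\xrightarrow{\sigma_i}p_{i+1}$, Duplicator answers $q_i\xrightarrow{\sigma_i}q_{i+1}$; Duplicator wins the infinite play if $p_i\in F\Rightarrow q_i\in F$ for all $i$; $p\sqsubseteq^{\mathrm{di}}q$ iff she has a winning strategy from $(p,q)$; $\sqsubset^{\mathrm{di}}$ is its strict part. Backward finite trace inclusion: $p\subseteq^{\mathrm{bw}}q$ iff for every finite word $w$, if some $w$-trace starting in $I$ ends in $p$, then some $w$-trace starting in $I$ ends in $q$. $\mathrm{Prune}(\mathcal A,P)$ has transition set $\{t\in\delta:\nexists t'\in\delta,(t,t')\in P\}$; $P(R_b,R_f)=\{((p,\sigma,r),(p',\sigma,r'))\in\delta\times\delta:p\,R_b\,p',\ r\,R_f\,r'\}$. *)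

(* Defs.v *)
From mathcomp Require Import all_boot.
Set Implicit Arguments. Unset Strict Implicit. Unset Printing Implicit Defensive.

Record nfa (Sigma Q : finType) := NFA {
  init : Q -> Prop;
  final : Q -> Prop;
  trans : Q -> Sigma -> Q -> Prop }.

Section NFA.
Variables (Sigma Q : finType).
Implicit Types (A : nfa Sigma Q).

Definition fw_complete A := forall (p : Q) (a : Sigma), exists r, trans A p a r.
Definition bw_complete A := forall (r : Q) (a : Sigma), exists p, trans A p a r.

Fixpoint trace A (q : Q) (w : seq Sigma) (p : Q) : Prop :=
  match w with
  | [::] => q = p
  | a :: w' => exists r, trans A q a r /\ trace A r w' p
  end.

Definition lang A (w : seq Sigma) : Prop :=
  exists i f, init A i /\ final A f /\ trace A i w f.

(* Direct simulation game.  A Duplicator strategy maps the history of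
   Spoiler's moves (sigma_0,p_1),...,(sigma_i,p_{i+1}) to q_{i+1}.
   A Spoiler play is an infinite sequence of transitions from p. *)
Definition history (sg : nat -> Sigma) (ps : nat -> Q) (n : nat) :
  seq (Sigma * Q) := [seq (sg k, ps k.+1) | k <- iota 0 n].

Definition dup_play (q : Q) (f : seq (Sigma * Q) -> Q)
  (sg : nat -> Sigma) (ps : nat -> Q) (i : nat) : Q :=
  match i with 0 => q | j.+1 => f (history sg ps j.+1) end.

Definition dsim A (p q : Q) : Prop :=
  exists f : seq (Sigma * Q) -> Q,
    forall (sg : nat -> Sigma) (ps : nat -> Q),
      ps 0 = p ->
      (forall i, trans A (ps i) (sg i) (ps i.+1)) ->
      forall i,
        trans A (dup_play q f sg ps i) (sg i) (dup_play q f sg ps i.+1) /\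
        (final A (ps i) -> final A (dup_play q f sg ps i)).

Definition dsim_strict A (p q : Q) : Prop := dsim A p q /\ ~ dsim A q p.

Definition bw_incl A (p q : Q) : Prop :=
  forall w : seq Sigma,
    (exists i, init A i /\ trace A i w p) ->
    (exists i, init A i /\ trace A i w q).

Definition Prel A (Rb Rf : Q -> Q -> Prop) (t t' : Q * Sigma * Q) : Prop :=
  let: (p, a, r) := t in let: (p', a', r') := t' in
  [/\ trans A p a r, trans A p' a' r', a = a', Rb p p' & Rf r r'].

Definition prune A (P : Q * Sigma * Q -> Q * Sigma * Q -> Prop) : nfa Sigma Q :=
  NFA (init A) (final A)
    (fun p a r => trans A p a r /\
       ~ exists t' : Q * Sigma * Q,
           let: (p', a', r') := t' in trans A p' a' r' /\ P (p, a, r) t').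

End NFA.

(* Main.v *)
From Stdlib Require Import ClassicalEpsilon Classical Wf_nat.
Require Import Defs.
From mathcomp Require Import all_boot.
Set Implicit Arguments. Unset Strict Implicit.

Lemma history_S (Sigma Q : finType) (sg : nat -> Sigma) (ps : nat -> Q) n :
  history sg ps n.+1 = rcons (history sg ps n) (sg n, ps n.+1).
Proof. by rewrite /history -addn1 iotaD map_cat /= cats1 add0n addn1. Qed.

Lemma history_shift (Sigma Q : finType) (sg : nat -> Sigma) (ps : nat -> Q) n :
  history sg ps n.+1 = (sg 0, ps 1) :: history (fun k => sg k.+1) (fun k => ps k.+1) n.
Proof.
rewrite /history /= -[1]/(1+0) iotaDl -map_comp; congr (_ :: _); apply: eq_map => k; rewrite /= add1n.
Qed.

Lemma dsim_refl (Sigma Q : finType) (A : nfa Sigma Q) p : dsim A p p.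
Proof.
exists (fun h => last p [seq x.2 | x <- h]) => sg ps H0 Htr.
have E : forall j, dup_play p (fun h => last p [seq x.2 | x <- h]) sg ps j = ps j.
  case=> [|j]; first by rewrite /= H0.
  change (last p [seq x.2 | x <- history sg ps j.+1] = ps j.+1).
  by rewrite history_S map_rcons last_rcons.
by move=> i; rewrite !E; split.
Qed.

Fixpoint aux (Sigma Q : finType) (f1 : seq (Sigma * Q) -> Q) (pre h : seq (Sigma * Q)) :=
  match h with
  | [::] => [::]
  | x :: h' => (x.1, f1 (rcons pre x)) :: aux f1 (rcons pre x) h'
  end.

Lemma aux_hist (Sigma Q : finType) (f1 : seq (Sigma * Q) -> Q) sg ps n : forall m,
  aux f1 (history sg ps m) [seq (sg k, ps k.+1) | k <- iota m n] =
  [seq (sg k, f1 (history sg ps k.+1)) | k <- iota m n].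
Proof.
elim: n => [|n IH] m //=. by rewrite -history_S IH.
Qed.

Lemma dsim_trans (Sigma Q : finType) (A : nfa Sigma Q) p q r :
  dsim A p q -> dsim A q r -> dsim A p r.
Proof.
move=> [f1 H1] [f2 H2].
exists (fun h => f2 (aux f1 [::] h)) => sg ps H0 Htr.
set qs := dup_play q f1 sg ps.
have Hq0 : qs 0 = q by [].
have Hqt : forall i, trans A (qs i) (sg i) (qs i.+1) by move=> i; case: (H1 sg ps H0 Htr i).
have E : forall i, dup_play r (fun h => f2 (aux f1 [::] h)) sg ps i = dup_play r f2 sg qs i.
  case=> [|j] //=. congr f2. exact: (aux_hist f1 sg ps j.+1 0).
move=> i; rewrite !E; split; first by case: (H2 sg qs Hq0 Hqt i).
move=> Hf; case: (H2 sg qs Hq0 Hqt i) => _; apply; by case: (H1 sg ps H0 Htr i) => _; apply.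
Qed.

Fixpoint ext (Q : Type) (nxt : Q -> Q) (s : Q) (n : nat) : Q :=
  match n with 0 => s | n'.+1 => nxt (ext nxt s n') end.

Lemma dsim_step (Sigma Q : finType) (A : nfa Sigma Q) :
  fw_complete A -> forall x xh a y, dsim A x xh -> trans A x a y ->
  exists y1, trans A xh a y1 /\ dsim A y y1.
Proof.
move=> hfw x xh a y [f Hf] Hxy.
pose nxt := fun p => proj1_sig (constructive_indefinite_description _ (hfw p a)).
have Hn : forall p, trans A p a (nxt p) by move=> p; exact: proj2_sig (constructive_indefinite_description _ (hfw p a)).
exists (f [:: (a, y)]); split.
  pose ps := fun i => match i with 0 => x | k.+1 => ext nxt y k end.
  have := (Hf (fun _ => a) ps erefl _ 0).1; apply.
  by case=> [|k] //=.
exists (fun h => f ((a, y) :: h)) => sg' ps' H0 Htr.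
pose sg := fun i => match i with 0 => a | k.+1 => sg' k end.
pose ps := fun i => match i with 0 => x | k.+1 => ps' k end.
have Hv : forall i, trans A (ps i) (sg i) (ps i.+1).
  by case=> [|k] //=; rewrite H0.
have E : forall i, dup_play (f [:: (a, y)]) (fun h => f ((a, y) :: h)) sg' ps' i
                   = dup_play xh f sg ps i.+1.
  case=> [|j] /=; first by rewrite /history /= H0.
  by rewrite [history sg ps j.+2]history_shift /= H0.
move=> i; rewrite !E. exact: (Hf sg ps erefl Hv i.+1).
Qed.

Lemma dsim_final (Sigma Q : finType) (A : nfa Sigma Q) (a : Sigma) :
  fw_complete A -> forall p q, dsim A p q -> final A p -> final A q.
Proof.
move=> hfw p q [f Hf].
pose nxt := fun p => proj1_sig (constructive_indefinite_description _ (hfw p a)).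
have Hn : forall p, trans A p a (nxt p) by move=> r; exact: proj2_sig (constructive_indefinite_description _ (hfw r a)).
exact: (Hf (fun _ => a) (ext nxt p) erefl (fun i => Hn _) 0).2.
Qed.

Lemma trace_rcons (Sigma Q : finType) (B : nfa Sigma Q) u a : forall i p,
  trace B i (rcons u a) p <-> exists x, trace B i u x /\ trans B x a p.
Proof.
elim: u => [|b u IH] i p /=.
  split; [move=> [r [H <-]]; by exists i | move=> [x [<- H]]; by exists p].
split.
  move=> [r [H1 H2]]; have [x [H3 H4]] := (IH r p).1 H2; exists x; split => //; by exists r.
move=> [x [[r [H1 H2]] H3]]; exists r; split => //; apply/IH; by exists x.
Qed.

Lemma trace_prune (Sigma Q : finType) (A : nfa Sigma Q) P u : forall i p,
  trace (prune A P) i u p -> trace A i u p.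
Proof.
elim: u => [|b u IH] i p //= [r [[H _] H2]]; exists r; split => //; exact: IH.
Qed.

Lemma wf_strict (Sigma Q : finType) (A : nfa Sigma Q) :
  well_founded (fun y' y => dsim_strict A y y').
Proof.
pose sb := fun y z => if excluded_middle_informative (dsim_strict A y z) then true else false.
have sbP : forall y z, sb y z <-> dsim_strict A y z.
  by move=> y z; rewrite /sb; case: excluded_middle_informative.
apply: (well_founded_lt_compat _ (fun y => #|[pred z | sb y z]|)) => y' y Hs.
apply/ltP; apply: proper_card; apply/properP; split.
  apply/subsetP => z; rewrite !inE => /sbP [Hd Hn]; apply/sbP; split.
    exact: dsim_trans Hs.1 Hd.
  move=> Hzy; apply: Hn; exact: dsim_trans Hzy Hs.1.
exists y'; rewrite !inE; first by apply/sbP.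
by apply/negP => /sbP [_ H]; apply: H; apply: dsim_refl.
Qed.

Theorem theorem5p9 (Sigma Q : finType) (A : nfa Sigma Q) :
  fw_complete A -> bw_complete A ->
  forall w : seq Sigma,
    lang (prune A (Prel A (bw_incl A) (dsim_strict A))) w <-> lang A w.
Proof.
move=> hfw hbw w.
set PA := prune A (Prel A (bw_incl A) (dsim_strict A)).
split.
  move=> [i [f [Hi [Hf Ht]]]]; exists i, f; split => //; split => //; exact: trace_prune Ht.
have claim : forall u p, (exists i, init A i /\ trace A i u p) ->
   exists p', (exists i, init A i /\ trace PA i u p') /\ dsim A p p'.
  elim/last_ind => [|u a IH] p.
    move=> [i [Hi /= <-]]; exists i; split; last exact: dsim_refl.
    by exists i.
  move=> [i [Hi /trace_rcons [x [Hx Hxp]]]].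
  have : exists x, (exists i, init A i /\ trace A i u x) /\ trans A x a p.
    by exists x; split => //; exists i.
  clear i Hi x Hx Hxp.
  elim/(well_founded_ind (wf_strict A)): p => y IHy [x [Rx Hxy]].
  have [xh [[i [Hi Hti]] Hxxh]] := IH x Rx.
  have [y1 [Ht1 Hd1]] := dsim_step hfw Hxxh Hxy.
  case: (classic (exists t' : Q * Sigma * Q,
           let: (p', a', r') := t' in trans A p' a' r' /\
             Prel A (bw_incl A) (dsim_strict A) (xh, a, y1) t')) => Hex.
    move: Hex => [[[x' a'] y'] [Htr' [_ _ Ea Hbw Hs]]]; subst a'.
    have Rx' : exists i, init A i /\ trace A i u x'.
      apply: Hbw; exists i; split => //; exact: trace_prune Hti.
    have Hyy' : dsim_strict A y y'.
      split; first exact: dsim_trans Hd1 Hs.1.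
      move=> H; apply: Hs.2; exact: dsim_trans H Hd1.
    have [yh [Ryh Hd]] := IHy y' Hyy' (ex_intro _ x' (conj Rx' Htr')).
    exists yh; split => //; exact: dsim_trans Hyy'.1 Hd.
  exists y1; split => //; exists i; split => //; apply/trace_rcons.
  by exists xh; split => //; split.
move=> [i [f [Hi [Hf Ht]]]].
case: w Ht => [|a w] Ht.
  by exists i, f; split => //; split.
have [p' [[j [Hj Htj]] Hd]] := claim _ f (ex_intro _ i (conj Hi Ht)).
exists j, p'; split => //; split => //; exact: (dsim_final a hfw Hd Hf).
Qed.
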